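(* Let $G$ be a group, $n\ge 2$, $X=\{x_1,\dots,x_n\}$, fix a function $X\to G$, and let $(\mathcal X_l)_{l\ge1}$ be a non-backtracking random walk on $(G,X)$. Then the Markov chain $(\mathcal X_l)$ on $\Omega=G\times\{\pm1,\dots,\pm n\}$ is irreducible if and only if $G$ is generated by (the images of) $x_1,\dots,x_n$ but $G$ is not a free group freely generated by $x_1,\dots,x_n$ (i.e. the induced homomorphism $F(X)\to G$ is surjective but not injective).
   Context: Let $G$ be a group, $X=\{x_1,\dots,x_n\}$ a set with $n\ge 2$, and fix a function $X\to G$; we identify each $x_i$ with its image in $G$. Let $\Omega=G\times\{\pm1,\pm2,\dots,\pm n\}$, with elements written $(g,\epsilon i)$, $g\in G$, $\epsilon=\pm1$, $i\in\{1,\dots,n\}$. A non-backtracking random walk on $(G,X)$ is a Markov chain $(\mathcal X_l)_{l\ge1}$ on $\Omega$ with transition probabilities $\mathbb P(\mathcal X_{l+1}=(g,\epsilon i)\mid \mathcal X_l=(h,\epsilon' j))=\alpha_{\epsilon' j,\epsilon i}$ if $g=hx_i^{\epsilon}$ and $\epsilon i\neq -\epsilon' j$, and $=0$ otherwise, where the $\alpha_{\epsilon' j,\epsilon i}$ are positive constants with $\sum_{\epsilon i\neq-\epsilon' j}\alpha_{\epsilon' j,\epsilon i}=1$ for each $\epsilon' j$; and with initial distribution $\mathbb P(\mathcal X_1=(g,\epsilon i))=\beta_{\epsilon i}$ if $g=x_i^{\epsilon}$ and $0$ otherwise, for positive constants $\beta_{\epsilon i}$ summing to $1$. Irreducibility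 and period refer to the Markov chain on the full state space $\Omega$. *)

(* Defs.v *)
From Stdlib Require Import Reals List Relations ClassicalEpsilon.
Import ListNotations.
Open Scope R_scope.

Record IsGroup (G : Type) (mul : G -> G -> G) (one : G) (inv : G -> G) : Prop := {
  grp_assoc : forall a b c, mul a (mul b c) = mul (mul a b) c;
  grp_one_l : forall a, mul one a = a;
  grp_one_r : forall a, mul a one = a;
  grp_inv_l : forall a, mul (inv a) a = one;
  grp_inv_r : forall a, mul a (inv a) = one }.

(** A letter [(true, i)] stands for [+(i+1)], i.e. x_{i+1}; [(false, i)] for [-(i+1)],
    i.e. x_{i+1}^{-1}.  Indices are 0-based: valid letters have [i < n]. *)
Definition letter := (bool * nat)%type.
Definition valid_letter (n : nat) (a : letter) : Prop := (snd a < n)%nat.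
Definition linv (a : letter) : letter := (negb (fst a), snd a).

Definition letter_eqb (a b : letter) : bool :=
  Bool.eqb (fst a) (fst b) && Nat.eqb (snd a) (snd b).

Definition letters (n : nat) : list letter :=
  map (fun i => (true, i)) (seq 0 n) ++ map (fun i => (false, i)) (seq 0 n).

Definition sumR (l : list R) : R := fold_right Rplus 0 l.

Section Walk.
Context {G : Type} (mul : G -> G -> G) (one : G) (inv : G -> G) (x : nat -> G).

Definition ev_letter (a : letter) : G := if fst a then x (snd a) else inv (x (snd a)).

Definition ev_word (w : list letter) : G := fold_right mul one (map ev_letter w).

Definition nbrw_P (n : nat) (alpha : letter -> letter -> R)
    (s t : G * letter) : R :=
  let (h, a) := s in let (g, b) := t in
  if excluded_middle_informative
       (valid_letter n b /\ g = mul h (ev_letter b) /\ b <> linv a)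
  then alpha a b else 0.

Definition nbrw_irreducible (n : nat) (alpha : letter -> letter -> R) : Prop :=
  forall (s t : G * letter), valid_letter n (snd s) -> valid_letter n (snd t) ->
    clos_trans (G * letter) (fun u v => nbrw_P n alpha u v > 0) s t.
End Walk.

Definition valid_word (n : nat) (w : list letter) : Prop := Forall (valid_letter n) w.

Fixpoint reduced (w : list letter) : Prop :=
  match w with
  | a :: ((b :: _) as w') => b <> linv a /\ reduced w'
  | _ => True
  end.

Definition generated_by {G : Type} (mul : G -> G -> G) (one : G) (inv : G -> G)
  (x : nat -> G) (n : nat) : Prop :=
  forall g : G, exists w, valid_word n w /\ ev_word mul one inv x w = g.

(** G is freely generated by x_1,...,x_n: the map F(X) -> G (F(X) realised as the
    set of reduced words over X^{+-1}) is injective. *)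
Definition freely_generated_by {G : Type} (mul : G -> G -> G) (one : G) (inv : G -> G)
  (x : nat -> G) (n : nat) : Prop :=
  forall w1 w2, valid_word n w1 -> valid_word n w2 -> reduced w1 -> reduced w2 ->
    ev_word mul one inv x w1 = ev_word mul one inv x w2 -> w1 = w2.

(* Main.v *)
Require Import Defs.
From Stdlib Require Import Reals List Relations.
From Stdlib Require Import Classical ClassicalEpsilon Lra Lia.
Import ListNotations.
Open Scope R_scope.

Lemma last_default {A} (l : list A) d d' : l <> nil -> last l d = last l d'.
Proof.
  induction l as [|a l IH]; intros H; [congruence|].
  destruct l; [reflexivity|]. simpl. apply IH. discriminate.
Qed.

Lemma linv_linv (a : letter) : linv (linv a) = a.
Proof. destruct a as [[] i]; reflexivity. Qed.

Lemma linv_inj (a b : letter) : linv a = linv b -> a = b.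
Proof. intro H. rewrite <- (linv_linv a), <- (linv_linv b), H. reflexivity. Qed.

Lemma linv_neq (a : letter) : a <> linv a.
Proof. destruct a as [[] i]; unfold linv; simpl; congruence. Qed.

Lemma valid_linv n (a : letter) : valid_letter n a -> valid_letter n (linv a).
Proof. destruct a; unfold valid_letter, linv; simpl; auto. Qed.

Lemma reduced_tail (a : letter) w : reduced (a :: w) -> reduced w.
Proof. destruct w; simpl; tauto. Qed.

Lemma valid_last n (w : list letter) d : valid_word n w -> w <> nil -> valid_letter n (last w d).
Proof.
  induction w as [|a w IH]; intros Hw Hne; [congruence|].
  inversion Hw; subst. destruct w; [assumption|]. simpl. apply IH; auto. discriminate.
Qed.

Lemma pick3 n (Hn : (2 <= n)%nat) (y1 y2 y3 : letter) :
  exists e, valid_letter n e /\ e <> y1 /\ e <> y2 /\ e <> y3.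
Proof.
  assert (V : forall b i, (i < 2)%nat -> valid_letter n (b, i))
    by (intros; unfold valid_letter; simpl; lia).
  destruct (classic (exists e, valid_letter n e /\ e <> y1 /\ e <> y2 /\ e <> y3))
    as [H|H]; [exact H|exfalso].
  assert (K : forall e, valid_letter n e -> e = y1 \/ e = y2 \/ e = y3).
  { intros e He. apply NNPP; intro C; apply H; exists e; tauto. }
  pose proof (K (true,0%nat) (V true 0%nat ltac:(lia))) as K1.
  pose proof (K (false,0%nat) (V false 0%nat ltac:(lia))) as K2.
  pose proof (K (true,1%nat) (V true 1%nat ltac:(lia))) as K3.
  pose proof (K (false,1%nat) (V false 1%nat ltac:(lia))) as K4.
  destruct K1 as [K1|[K1|K1]]; destruct K2 as [K2|[K2|K2]];
  destruct K3 as [K3|[K3|K3]]; destruct K4 as [K4|[K4|K4]]; congruence.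
Qed.

Theorem mainTheorem1
  (G : Type) (mul : G -> G -> G) (one : G) (inv : G -> G)
  (HG : IsGroup G mul one inv)
  (n : nat) (Hn : (2 <= n)%nat) (x : nat -> G)
  (alpha : letter -> letter -> R) (beta : letter -> R)
  (Halpha_pos : forall a b, valid_letter n a -> valid_letter n b ->
      b <> linv a -> alpha a b > 0)
  (Halpha_sum : forall a, valid_letter n a ->
      sumR (map (alpha a)
        (filter (fun b => negb (letter_eqb b (linv a))) (letters n))) = 1)
  (Hbeta_pos : forall a, valid_letter n a -> beta a > 0)
  (Hbeta_sum : sumR (map beta (letters n)) = 1) :
  nbrw_irreducible mul inv x n alpha <->
  (generated_by mul one inv x n /\ ~ freely_generated_by mul one inv x n).
Proof.
  destruct HG as [Hassoc Hol Hor Hil Hir].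
  assert (inv_unique : forall a b, mul a b = one -> b = inv a).
  { intros a b H. rewrite <- (Hol b), <- (Hil a), <- Hassoc, H, Hor. reflexivity. }
  assert (inv_inv : forall a, inv (inv a) = a).
  { intros a. symmetry. apply inv_unique. apply Hil. }
  assert (inv_mul : forall a b, inv (mul a b) = mul (inv b) (inv a)).
  { intros a b. symmetry. apply inv_unique.
    rewrite <- Hassoc, (Hassoc b), Hir, Hol, Hir. reflexivity. }
  assert (cancel_l : forall a b c, mul a b = mul a c -> b = c).
  { intros a b c H. rewrite <- (Hol b), <- (Hol c), <- (Hil a), <- !Hassoc, H.
    reflexivity. }
  assert (ev_linv : forall d, ev_letter inv x (linv d) = inv (ev_letter inv x d)).
  { intros [[] i]; unfold ev_letter, linv; simpl; [reflexivity| now rewrite inv_inv]. }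
  set (Rel := fun u v : G * letter => nbrw_P mul inv x n alpha u v > 0).
  assert (step : forall h a b, valid_letter n a -> valid_letter n b -> b <> linv a ->
            Rel (h,a) (mul h (ev_letter inv x b), b)).
  { intros h a b Ha Hb Hab. unfold Rel, nbrw_P. cbv beta iota.
    destruct (excluded_middle_informative _) as [_|Hc]; [now apply Halpha_pos|].
    exfalso; apply Hc; auto. }
  set (Good := fun a v b => forall h, clos_trans _ Rel (h,a) (mul h v, b)).
  assert (Gcomp : forall a v b v' c, Good a v b -> Good b v' c -> Good a (mul v v') c).
  { unfold Good. intros a v b v' c H1 H2 h. eapply t_trans; [apply H1|].
    rewrite Hassoc. apply H2. }
  assert (Geq : forall a v b v', Good a v b -> v = v' -> Good a v' b).
  { intros; subst; auto. }
  assert (Gstep : forall a b, valid_letter n a -> valid_letter n b -> b <> linv a ->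
            Good a (ev_letter inv x b) b).
  { unfold Good. intros a b Ha Hb Hab h. apply t_step. apply step; auto. }
  assert (Gfwd : forall w c, valid_letter n c -> valid_word n w -> reduced (c::w) -> w <> nil ->
             Good c (ev_word mul one inv x w) (last w c)).
  { induction w as [|d w IH]; intros c Hc Hw Hr Hne; [congruence|].
    inversion Hw as [|? ? Hd Hw']; subst.
    assert (Hdc : d <> linv c) by (destruct w; simpl in Hr; tauto).
    destruct w as [|e w''].
    - eapply Geq. apply Gstep; auto.
      unfold ev_word; simpl; now rewrite Hor.
    - assert (Hr' : reduced (d::e::w'')) by (simpl in Hr |- *; tauto).
      change (ev_word mul one inv x (d :: e :: w''))
        with (mul (ev_letter inv x d) (ev_word mul one inv x (e::w''))).
      replace (last (d :: e :: w'') c) with (last (e::w'') d)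
        by (rewrite (last_default (e::w'') d c) by discriminate; reflexivity).
      apply Gcomp with d. apply Gstep; auto. apply IH; auto. discriminate. }
  assert (Gbwd : forall w c, valid_letter n c -> valid_word n w -> reduced w -> w <> nil ->
             c <> last w c -> Good c (inv (ev_word mul one inv x w)) (linv (hd c w))).
  { induction w as [|d w IH]; intros c Hc Hw Hr Hne Hcl; [congruence|].
    inversion Hw as [|? ? Hd Hw']; subst.
    destruct w as [|e w''].
    - simpl in Hcl |- *. eapply Geq.
      { apply Gstep; [exact Hc | apply valid_linv; exact Hd |].
        intro E. apply Hcl. symmetry. apply linv_inj. exact E. }
      rewrite ev_linv. unfold ev_word; simpl; now rewrite Hor.
    - assert (Hed : e <> linv d) by (simpl in Hr; tauto).
      assert (Hr' : reduced (e::w'')) by (eapply reduced_tail; eauto).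
      assert (H1 : Good c (inv (ev_word mul one inv x (e :: w''))) (linv (hd c (e :: w''))))
        by (apply IH; auto; try discriminate; simpl in Hcl |- *; exact Hcl).
      simpl in H1 |- *.
      eapply Geq. eapply (Gcomp _ _ _ _ _ H1).
      { apply Gstep. apply valid_linv; inversion Hw'; auto. apply valid_linv; auto.
        rewrite linv_linv. intro E; apply Hed; symmetry; exact E. }
      rewrite ev_linv, <- inv_mul. reflexivity. }
  assert (Hrel : forall w1 w2, valid_word n w1 -> valid_word n w2 -> reduced w1 -> reduced w2 ->
     ev_word mul one inv x w1 = ev_word mul one inv x w2 -> w1 <> w2 ->
     exists p l, valid_letter n l /\ forall c, valid_letter n c -> c <> p -> Good c one l).
  { induction w1 as [|a t1 IH]; intros w2 Hv1 Hv2 Hr1 Hr2 Heq Hne; destruct w2 as [|b t2].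
    - congruence.
    - exists (linv b), (last (b::t2) b). split. apply valid_last; auto; discriminate.
      intros c Hc Hcp. eapply Geq.
      + rewrite (last_default _ b c) by discriminate. apply Gfwd; [exact Hc|assumption| |discriminate].
        simpl. split; auto. intro E; apply Hcp. rewrite E, linv_linv. reflexivity.
      + rewrite <- Heq. reflexivity.
    - exists (linv a), (last (a::t1) a). split. apply valid_last; auto; discriminate.
      intros c Hc Hcp. eapply Geq.
      + rewrite (last_default _ a c) by discriminate. apply Gfwd; [exact Hc|assumption| |discriminate].
        simpl. split; auto. intro E; apply Hcp. rewrite E, linv_linv. reflexivity.
      + rewrite Heq. reflexivity.
    - inversion Hv1; inversion Hv2; subst.
      destruct (classic (a = b)) as [Eab|Nab].
      + subst b. apply (IH t2); auto.
        * eapply reduced_tail; eauto.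
        * eapply reduced_tail; eauto.
        * apply (cancel_l (ev_letter inv x a)). exact Heq.
        * intro E; apply Hne; subst; reflexivity.
      + exists (last (a::t1) a), (last (b::t2) b). split.
        apply valid_last; auto; discriminate.
        intros c Hc Hcp.
        assert (K1 : Good c (inv (ev_word mul one inv x (a::t1))) (linv (hd c (a::t1)))).
        { apply Gbwd; auto. discriminate.
          rewrite (last_default _ c a) by discriminate. exact Hcp. }
        assert (K2 : Good (linv a) (ev_word mul one inv x (b::t2)) (last (b::t2) (linv a))).
        { apply Gfwd; [apply valid_linv; assumption | assumption | | discriminate].
          simpl. split; [|exact Hr2]. rewrite linv_linv. intro E; apply Nab; symmetry; exact E. }
        simpl in K1. eapply Geq. eapply (Gcomp _ _ _ _ _ K1).
        rewrite (last_default _ (linv a) b) in K2 by discriminate. exact K2.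
        rewrite Heq. apply Hil. }
  assert (Ext : forall s t, clos_trans _ Rel s t -> exists w, w <> nil /\ valid_word n w /\
      reduced (snd s :: w) /\ fst t = mul (fst s) (ev_word mul one inv x w) /\
      snd t = last w (snd s)).
  { intros s t H. apply clos_trans_t1n in H. induction H as [s t H|s s1 t H H1 IH].
    - destruct s as [h a], t as [g b]. unfold Rel, nbrw_P in H. cbv beta iota in H.
      match type of H with context [excluded_middle_informative ?P] =>
        destruct (excluded_middle_informative P) as [[Hb [Hg Hba]]|_]; [|lra] end.
      exists [b]. split; [discriminate|]. split; [constructor; [exact Hb|constructor]|].
      split; [simpl; auto|]. split; [|reflexivity].
      simpl. rewrite Hg. unfold ev_word; simpl; rewrite Hor; reflexivity.
    - destruct IH as [w [Hne [Hw [Hr [Hf Hs]]]]].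
      destruct s as [h a], s1 as [h1 a1]. unfold Rel, nbrw_P in H. cbv beta iota in H.
      match type of H with context [excluded_middle_informative ?P] =>
        destruct (excluded_middle_informative P) as [[Ha1 [Hg Hba]]|_]; [|lra] end.
      exists (a1 :: w). split; [discriminate|]. split; [constructor; auto|].
      split. { destruct w; [congruence|]. simpl in Hr |- *. split; auto. }
      split.
      + rewrite Hf. simpl fst. rewrite Hg.
        change (ev_word mul one inv x (a1::w))
          with (mul (ev_letter inv x a1) (ev_word mul one inv x w)).
        rewrite Hassoc. reflexivity.
      + rewrite Hs. simpl snd. rewrite (last_default w a1 a) by exact Hne.
        destruct w; [congruence|]. reflexivity. }
  split.
  - intro Hirr.
    assert (HA : valid_letter n (true, 0%nat)) by (unfold valid_letter; simpl; lia).
    split.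
    + intro g.
      destruct (Ext _ _ (Hirr (one,(true,0%nat)) (g,(true,0%nat)) HA HA))
        as [w [Hne [Hw [Hr [Hf Hs]]]]].
      exists w. split; auto. simpl in Hf. rewrite Hf, Hol. reflexivity.
    + intro Hfree.
      destruct (Ext _ _ (Hirr (one,(true,0%nat)) (one,(true,0%nat)) HA HA))
        as [w [Hne [Hw [Hr [Hf Hs]]]]].
      simpl in Hf, Hr. apply Hne. apply (Hfree w []); auto.
      constructor. eapply reduced_tail; eauto. exact I.
      rewrite Hol in Hf. rewrite <- Hf. reflexivity.
  - intros [Hgen Hnf].
    assert (Hex : exists w1 w2, valid_word n w1 /\ valid_word n w2 /\ reduced w1 /\
       reduced w2 /\ ev_word mul one inv x w1 = ev_word mul one inv x w2 /\ w1 <> w2).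
    { apply NNPP; intro C; apply Hnf; intros w1 w2 H1 H2 H3 H4 H5.
      apply NNPP; intro C2; apply C; exists w1, w2; tauto. }
    destruct Hex as [w1 [w2 [H1 [H2 [H3 [H4 [H5 H6]]]]]]].
    destruct (Hrel w1 w2 H1 H2 H3 H4 H5 H6) as [p [l [Hl Hpl]]].
    assert (Z : forall a e, valid_letter n a -> valid_letter n e -> e <> linv a -> e <> p ->
               e <> l -> Good a one (linv e)).
    { intros a e Ha He Hea Hep Hel.
      eapply Geq. eapply (Gcomp _ _ _ _ _ (Gcomp _ _ _ _ _ (Gstep a e Ha He Hea)
                                          (Hpl e He Hep))).
      { apply Gstep; [exact Hl | apply valid_linv; exact He |].
        intro E; apply Hel; apply linv_inj; exact E. }
      rewrite Hor, ev_linv, Hir. reflexivity. }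
    assert (Z2 : forall a e, valid_letter n a -> valid_letter n e -> e <> p ->
               e <> l -> Good a one (linv e)).
    { intros a e Ha He Hep Hel. destruct (classic (e = linv a)) as [E|E].
      - destruct (pick3 n Hn p l (linv a)) as [e' [He' [N1 [N2 N3]]]].
        eapply Geq. eapply (Gcomp _ _ _ _ _ (Z a e' Ha He' N3 N1 N2)).
        { apply Z; [apply valid_linv; exact He' | exact He | | exact Hep | exact Hel].
          rewrite linv_linv. congruence. }
        apply Hol.
      - apply Z; auto. }
    assert (All1 : forall a b, valid_letter n a -> valid_letter n b -> Good a one b).
    { intros a b Ha Hb.
      destruct (pick3 n Hn p l (linv b)) as [e1 [He1 [N1 [N2 N3]]]].
      destruct (pick3 n Hn p l b) as [e2 [He2 [M1 [M2 M3]]]].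
      assert (K1 := Z2 a e1 Ha He1 N1 N2).
      assert (K2 : Good (linv e1) (ev_letter inv x (linv b)) (linv b)).
      { apply Gstep; [apply valid_linv; exact He1 | apply valid_linv; exact Hb |].
        intro E; apply N3; apply linv_inj in E; rewrite E, linv_linv; reflexivity. }
      assert (K3 := Z2 (linv b) e2 (valid_linv _ _ Hb) He2 M1 M2).
      assert (K4 : Good (linv e2) (ev_letter inv x b) b).
      { apply Gstep; [apply valid_linv; exact He2 | exact Hb |]. rewrite linv_linv.
        intro E; apply M3; symmetry; exact E. }
      eapply Geq. eapply (Gcomp _ _ _ _ _ (Gcomp _ _ _ _ _ (Gcomp _ _ _ _ _ K1 K2) K3) K4).
      rewrite Hol, Hor, ev_linv, Hil. reflexivity. }
    assert (Gen : forall u, valid_word n u -> forall a b, valid_letter n a ->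
               valid_letter n b -> Good a (ev_word mul one inv x u) b).
    { induction u as [|c u IH]; intros Hu a b Ha Hb.
      - apply All1; auto.
      - inversion Hu; subst.
        eapply Geq. eapply (Gcomp _ _ _ _ _ (Gcomp _ _ _ _ _ (All1 a c Ha ltac:(auto))
                          (Gstep c c ltac:(auto) ltac:(auto) (linv_neq c)))).
        apply IH; auto.
        rewrite Hol. reflexivity. }
    intros [h a] [g b] Ha Hb. simpl in Ha, Hb.
    destruct (Hgen (mul (inv h) g)) as [u [Hu Heu]].
    pose proof (Gen u Hu a b Ha Hb h) as H.
    rewrite Heu, Hassoc, Hir, Hol in H. exact H.
Qed.
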